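(* Let $G$ be a fully connected (complete) graph on $n$ vertices $\{1,\dots,n\}$, and let $t\mapsto\rho_t=(\rho_1(t),\dots,\rho_n(t))$ be a differentiable, $T$-periodic curve in $\mathcal P_o(G)=\{\rho\in\mathbb R^n:\sum_i\rho_i=1,\ \rho_i>0\ \forall i\}$. Then there exists a family of transition rate matrices $Q(t)$ (i.e. $n\times n$ matrices with nonnegative off-diagonal entries and each row summing to zero) such that $\rho_t$ solves the master equation $\dot\rho_t=\rho_tQ(t)$ (row vector times matrix) for all $t$. *)

(* Defs.v *)
From mathcomp Require Import all_boot all_algebra.
From mathcomp Require Import all_classical all_reals all_analysis.
Import GRing.Theory Num.Theory.
Local Open Scope ring_scope.

Definition in_open_simplex {R : realType} {n : nat} (rho : 'rV[R]_n) : Prop :=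
  \sum_(i < n) rho 0 i = 1 /\ forall i : 'I_n, 0 < rho 0 i.

(* Transition rate matrix on the complete graph K_n: nonnegative off-diagonal
   entries (every pair i <> j is an edge, so no further sparsity constraint)
   and every row sums to zero. *)
Definition rate_matrix {R : realType} {n : nat} (Q : 'M[R]_n) : Prop :=
  (forall i j : 'I_n, i != j -> 0 <= Q i j) /\
  (forall i : 'I_n, \sum_(j < n) Q i j = 0).

(* Main.v *)
Require Import Defs.
From mathcomp Require Import all_boot all_algebra.
Import order.Order.TTheory GRing.Theory Num.Theory.
From mathcomp Require Import all_classical all_reals all_analysis.
From mathcomp Require Import lra.
Local Open Scope ring_scope.

Lemma pointwise (R : realType) (n : nat) (r v : 'rV[R]_n) :
  in_open_simplex r -> \sum_(i < n) v 0 i = 0 ->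
  exists Q : 'M[R]_n, rate_matrix Q /\ v = r *m Q.
Proof.
move=> [s1 pos] s0.
set c := \sum_(j < n) `|v 0 j| / r 0 j.
have cj : forall j, `|v 0 j| <= c * r 0 j.
  move=> j; rewrite -ler_pdivrMr // /c.
  rewrite (bigD1 j) //= lerDl; apply: sumr_ge0 => k _.
  by rewrite divr_ge0 // ltW.
exists (\matrix_(i, j) (v 0 j + c * r 0 j - (i == j)%:R * c)).
split; first split.
- move=> i j /negbTE ij; rewrite mxE ij mul0r subr0.
  have /ler_normlP [H1 _] := cj j; lra.
- move=> i; under eq_bigr do rewrite mxE.
  rewrite sumrB big_split /= s0 add0r -mulr_sumr s1 mulr1.
  rewrite (bigD1 i) //= eqxx mul1r big1 ?addr0 ?subrr //.
  by move=> j /negbTE; rewrite eq_sym => ->; rewrite mul0r.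
- apply/rowP => j; rewrite !mxE.
  under eq_bigr do rewrite mxE mulrBr mulrDr.
  rewrite sumrB big_split /= -!mulr_suml s1 !mul1r.
  rewrite (bigD1 j) //= eqxx mul1r big1 ?addr0; first by rewrite mulrC addrK.
  by move=> i /negbTE ->; rewrite mul0r mulr0.
Qed.
Lemma sumD (R : realType) (n : nat) (rho : R -> 'rV[R]_n) t :
  (forall t : R, derivable rho t 1) ->
  (forall t : R, in_open_simplex (rho t)) ->
  \sum_(i < n) ('D_1 rho t) 0 i = 0.
Proof.
move=> dr sr.
have dc : forall i, derivable (fun s => rho s 0 i) t 1.
  by move=> i; move/derivable_mxP: (dr t); apply.
rewrite derive_mx //.
under eq_bigr do rewrite mxE.
rewrite -derive_sum //.
have -> : (\sum_(i < n) (fun s => rho s 0 i)) = cst 1.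
  apply/funext => s; rewrite fct_sumE /=; exact: (sr s).1.
exact: derive_cst.
Qed.

Theorem mainTheorem4 (R : realType) (n : nat) (T : R) (rho : R -> 'rV[R]_n) :
  0 < T ->
  (forall t : R, derivable rho t 1) ->
  (forall t : R, rho (t + T) = rho t) ->
  (forall t : R, in_open_simplex (rho t)) ->
  exists Q : R -> 'M[R]_n,
    (forall t : R, rate_matrix (Q t)) /\
    (forall t : R, 'D_1 rho t = rho t *m Q t).
Proof.
move=> _ dr _ sr.
have H : forall t, exists Q : 'M[R]_n, rate_matrix Q /\ 'D_1 rho t = rho t *m Q.
  by move=> t; apply: pointwise => //; apply: sumD.
exists (fun t => sval (cid (H t))); split => t.
- exact: (svalP (cid (H t))).1.
- exact: (svalP (cid (H t))).2.
Qed.
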